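(* Let $\alpha\ge1$. Suppose valuation functions are arbitrary and for each item $j\in M$ the cost function $c_j:2^N\to\mathbb{R}_{\ge0}$ is non-decreasing, subadditive and $\alpha$-average max-bounded. Then the Sequential Mechanism satisfies IR, NPT and WGSP, is budget-balanced, and is $\alpha$-approximate with respect to the social cost.
   Context: Players $N=\{1,\dots,n\}$, items $M=\{1,\dots,m\}$. For an allocation $B=(B_1,\dots,B_n)$, $C(B)=\sum_{j\in M}c_j(\{i:j\in B_i\})$. Subadditive: $c(S\cup T)\le c(S)+c(T)$. $c$ is $\alpha$-average max-bounded if for every nonempty $T\subseteq N$, $\alpha\frac{c(T)}{|T|}\ge\max_{i\in T}c(\{i\})$. A mechanism maps declared valuations $b$ to an allocation $A$ and payments $p$; utility $u_i=v_i(A_i)-p_i$ with true valuation $v_i$. IR: $p_i\le b_i(A_i)$; NPT: $p_i\ge0$; WGSP: for every coalition $Q$, true $v_Q$, reports $v_{-Q}$ of others, there is no $b_Q$ with $u_i(b_Q,v_{-Q})>u_i(v_Q,v_{-Q})$ for all $i\in Q$. Budget-balanced: $\sum_ip_i=C(A)$. Social cost $\pi(A)=C(A)+\sum_i(v_i(M)-v_i(A_i))$; $\rho$-approximate: $\pi(A)\le\rho\min_{A'}\pi(A')$ for every truthfully reported profile. Sequential Mechanism: fix an order $1,\dots,n$ of the players. For $i=1,\dots,n$: define $p_i(S)=C(A_1,\dots,A_{i-1},S,\emptyset,\dots,\emptyset)-C(A_1,\dots,A_{i-1},\emptyset,\dots,\emptyset)$ and let $A_i$ be the lexicographically smallest maximizer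 of $b_i(S)-p_i(S)$ over $S\subseteq M$. Output $A=(A_i)$ and payments $p_i=p_i(A_i)$. *)

(* Defs.v *)
From HB Require Import structures.
From mathcomp Require Import all_boot all_order all_algebra.
Set Implicit Arguments. Unset Strict Implicit. Unset Printing Implicit Defensive.
Import Order.TTheory GRing.Theory Num.Theory.
Local Open Scope ring_scope.

Section Defs.
Variables (R : realFieldType) (n m : nat).

(* players are 'I_n, items are 'I_m *)
Notation alloc := {ffun 'I_n -> {set 'I_m}}.

Definition cost (c : 'I_m -> {set 'I_n} -> R) (B : alloc) : R :=
  \sum_(j < m) c j [set i | j \in B i].

Definition nondecreasing_cost (f : {set 'I_n} -> R) :=
  forall S T : {set 'I_n}, S \subset T -> f S <= f T.
Definition subadditive (f : {set 'I_n} -> R) :=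
  forall S T : {set 'I_n}, f (S :|: T) <= f S + f T.
Definition avg_max_bounded (alpha : R) (f : {set 'I_n} -> R) :=
  forall T : {set 'I_n}, T != set0 ->
    forall i, i \in T -> f [set i] <= alpha * f T / #|T|%:R.

Definition valuation (v : {set 'I_m} -> R) :=
  v set0 = 0 /\ forall S T : {set 'I_m}, S \subset T -> v S <= v T.

(* lexicographic key: characteristic vector (item 0 first) read as a binary
   number; lexicographic order on bundles = order on lexkey *)
Definition lexkey (S : {set 'I_m}) : nat := (\sum_(j in S) 2 ^ (m.-1 - j))%N.

Definition lexArgmax (f : {set 'I_m} -> R) : {set 'I_m} :=
  let S0 := [arg max_(S > set0) f S]%O in
  [arg min_(S < S0 | [forall T, f T <= f S]) lexkey S].

Definition upd (B : alloc) (i : 'I_n) (S : {set 'I_m}) : alloc :=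
  [ffun k => if k == i then S else B k].

(* p_i(S) given the allocation B of the previous players (later ones empty) *)
Definition price (c : 'I_m -> {set 'I_n} -> R) (B : alloc) (i : 'I_n)
  (S : {set 'I_m}) : R := cost c (upd B i S) - cost c B.

Fixpoint seqAlloc (c : 'I_m -> {set 'I_n} -> R)
  (b : 'I_n -> {set 'I_m} -> R) (k : nat) : alloc :=
  match k with
  | 0 => [ffun => set0]
  | k'.+1 =>
      let B := seqAlloc c b k' in
      match @insub _ (fun x => x < n)%N 'I_n k' with
      | Some i => upd B i (lexArgmax (fun S => b i S - price c B i S))
      | None => B
      end
  end.

Definition mechAlloc c b : alloc := seqAlloc c b n.
Definition mechPay c b (i : 'I_n) : R :=
  price c (seqAlloc c b i) i (mechAlloc c b i).

Definition util c (v b : 'I_n -> {set 'I_m} -> R) (i : 'I_n) : R :=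
  v i (mechAlloc c b i) - mechPay c b i.

Definition override (Q : {set 'I_n}) (d b : 'I_n -> {set 'I_m} -> R) :=
  fun i => if i \in Q then d i else b i.

Definition socialCost c (v : 'I_n -> {set 'I_m} -> R) (A : alloc) : R :=
  cost c A + \sum_(i < n) (v i setT - v i (A i)).

End Defs.

(* Main.v *)
Require Import Defs.
From HB Require Import structures.
From mathcomp Require Import all_boot all_order all_algebra.
From mathcomp Require Import lra.
Set Implicit Arguments. Unset Strict Implicit.
Import Order.TTheory GRing.Theory Num.Theory.
Local Open Scope ring_scope.
Section S.
Variables (R : realFieldType) (n m : nat) (c : 'I_m -> {set 'I_n} -> R).

Definition Ach (b : 'I_n -> {set 'I_m} -> R) (i : 'I_n) :=
  lexArgmax (fun S => b i S - price c (seqAlloc c b i) i S).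

Lemma seqAlloc_step b (i : 'I_n) :
  seqAlloc c b i.+1 = upd (seqAlloc c b i) i (Ach b i).
Proof.
rewrite /= insubT //= => Hi.
have -> : Sub (nat_of_ord i) Hi = i by apply: val_inj.
by [].
Qed.

Lemma seqAlloc_late b k (i : 'I_n) : (k <= i)%N -> seqAlloc c b k i = set0.
Proof.
elim: k => [|k IH] Hk /=; first by rewrite ffunE.
case: insubP => [j _ Hj|_]; last by apply: IH; apply: ltnW.
rewrite /upd ffunE.
case: eqP => [E|_]; last by apply: IH; apply: ltnW.
by move: Hk; rewrite E Hj ltnn.
Qed.

Lemma seqAlloc_early b k (i : 'I_n) : (i < k)%N -> seqAlloc c b k i = Ach b i.
Proof.
elim: k => [|k IH] //= Hk.
case: insubP => [j _ Hj|Hn].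
  rewrite /upd ffunE.
  case: eqP => [E|Ne].
    by rewrite E /Ach Hj.
  apply: IH; rewrite ltn_neqAle -ltnS Hk andbT.
  by apply/eqP => E; apply: Ne; apply: val_inj; rewrite Hj.
apply: IH; rewrite ltn_neqAle -ltnS Hk andbT.
apply/eqP => E; by move: Hn; rewrite -E ltn_ord.
Qed.

Lemma mechAllocE b i : mechAlloc c b i = Ach b i.
Proof. by apply: seqAlloc_early. Qed.

Lemma mechPayE b i : mechPay c b i = price c (seqAlloc c b i) i (Ach b i).
Proof. by rewrite /mechPay mechAllocE. Qed.

Lemma seqAlloc_agree b1 b2 k :
  (forall i : 'I_n, (i < k)%N -> b1 i = b2 i) -> seqAlloc c b1 k = seqAlloc c b2 k.
Proof.
elim: k => [|k IH] H //=.
rewrite IH; last by move=> i Hi; apply: H; apply: ltnW.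
case: insubP => [j _ Hj|_] //.
by rewrite H // Hj.
Qed.


Lemma updsetE (B : {ffun 'I_n -> {set 'I_m}}) i S j : B i = set0 ->
  [set k | j \in upd B i S k] =
  if j \in S then [set i] :|: [set k | j \in B k] else [set k | j \in B k].
Proof.
move=> Bi; apply/setP => k; rewrite /upd.
case: ifP => jS; rewrite !inE ffunE; case: eqP => [->|_] //=.
by rewrite jS Bi inE.
Qed.

Lemma priceE (B : {ffun 'I_n -> {set 'I_m}}) i S :
  price c B i S = \sum_(j < m) (c j [set k | j \in upd B i S k] - c j [set k | j \in B k]).
Proof. by rewrite /price /cost sumrB. Qed.

Hypothesis cmono : forall j, nondecreasing_cost (c j).
Hypothesis csub : forall j, subadditive (c j).

Lemma price_ge0 (B : {ffun 'I_n -> {set 'I_m}}) i S : B i = set0 -> 0 <= price c B i S.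
Proof.
move=> Bi; rewrite priceE; apply: sumr_ge0 => j _.
rewrite subr_ge0 updsetE //; case: ifP => _ //.
by apply: cmono; apply: subsetUr.
Qed.

Lemma price_le (B : {ffun 'I_n -> {set 'I_m}}) i S : B i = set0 ->
  price c B i S <= \sum_(j < m) (if j \in S then c j [set i] else 0).
Proof.
move=> Bi; rewrite priceE; apply: ler_sum => j _.
rewrite updsetE //; case: ifP => _; last by rewrite subrr.
by rewrite lerBlDr; apply: csub.
Qed.


Lemma cost0 b : (forall j, c j set0 = 0) -> cost c (seqAlloc c b 0) = 0.
Proof.
move=> c0; rewrite /cost big1 // => j _.
suff -> : [set i | j \in [ffun=> set0] i] = set0 :> {set 'I_n} by [].
by apply/setP => i; rewrite !inE ffunE inE.
Qed.

Lemma budget b : (forall j, c j set0 = 0) ->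
  \sum_(i < n) mechPay c b i = cost c (mechAlloc c b).
Proof.
move=> c0.
have -> : \sum_(i < n) mechPay c b i =
  \sum_(0 <= i < n) (cost c (seqAlloc c b i.+1) - cost c (seqAlloc c b i)).
  rewrite big_mkord; apply: eq_bigr => i _.
  by rewrite mechPayE seqAlloc_step.
by rewrite telescope_sumr // cost0 // subr0.
Qed.

End S.

Lemma lexArgmaxP {R : realFieldType} {m} (f : {set 'I_m} -> R) T :
  f T <= f (lexArgmax f).
Proof.
rewrite /lexArgmax.
case: arg_maxP => // S0 _ HS0.
case: arg_minnP.
  by apply/forallP => U; apply: HS0.
by move=> S /forallP H _; apply: H.
Qed.

Lemma avg_sum (R : realFieldType) n alpha (f : {set 'I_n} -> R) (T : {set 'I_n}) :
  f set0 = 0 -> avg_max_bounded alpha f ->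
  \sum_(i in T) f [set i] <= alpha * f T.
Proof.
move=> f0 Hf.
have [->|T0] := eqVneq T set0.
  by rewrite big_set0 f0 mulr0.
apply: le_trans (_ : \sum_(i in T) (alpha * f T / #|T|%:R) <= _).
  by apply: ler_sum => i iT; apply: Hf.
rewrite sumr_const -[_ *+ #|_|]mulr_natr divfK // pnatr_eq0 -lt0n card_gt0; exact: T0.
Qed.

Theorem mainTheorem14 (R : realFieldType) (n m : nat) (alpha : R)
    (c : 'I_m -> {set 'I_n} -> R) :
  1 <= alpha ->
  (forall j, c j set0 = 0) ->
  (forall j S, 0 <= c j S) ->
  (forall j, nondecreasing_cost (c j)) ->
  (forall j, subadditive (c j)) ->
  (forall j, avg_max_bounded alpha (c j)) ->
  [/\ (* IR *)
      (forall b : 'I_n -> {set 'I_m} -> R, (forall i, valuation (b i)) ->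
         forall i, mechPay c b i <= b i (mechAlloc c b i)),
      (* NPT *)
      (forall b : 'I_n -> {set 'I_m} -> R, (forall i, valuation (b i)) ->
         forall i, 0 <= mechPay c b i),
      (* WGSP *)
      (forall (v b d : 'I_n -> {set 'I_m} -> R) (Q : {set 'I_n}),
         (forall i, valuation (v i)) -> (forall i, valuation (b i)) ->
         (forall i, valuation (d i)) -> Q != set0 ->
         ~ (forall i, i \in Q ->
              util c v (override Q v b) i < util c v (override Q d b) i)),
      (* budget balance *)
      (forall b : 'I_n -> {set 'I_m} -> R, (forall i, valuation (b i)) ->
         \sum_(i < n) mechPay c b i = cost c (mechAlloc c b)) &
      (* alpha-approximation of social cost, truthful reports *)
      (forall v : 'I_n -> {set 'I_m} -> R, (forall i, valuation (v i)) ->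
         forall A' : {ffun 'I_n -> {set 'I_m}},
           socialCost c v (mechAlloc c v) <= alpha * socialCost c v A')].
Proof.
move=> a1 c0 cge0 cmono csub cavg.
have Bi0 : forall b (i : 'I_n), seqAlloc c b i i = set0.
  by move=> b i; apply: seqAlloc_late.
split.
- move=> b Hb i.
  rewrite mechPayE mechAllocE.
  have := lexArgmaxP (fun S => b i S - price c (seqAlloc c b i) i S) set0.
  rewrite -/(Ach c b i).
  have -> : price c (seqAlloc c b i) i set0 = 0.
    rewrite priceE; apply: big1 => j _.
    by rewrite updsetE // inE subrr.
  case: (Hb i) => -> _; lra.
- move=> b Hb i; rewrite mechPayE; exact: price_ge0.
- move=> v b d Q Hv Hb Hd Q0 H.
  case/set0Pn: Q0 => i1 Hi1.
  case: (arg_minnP (fun i : 'I_n => nat_of_ord i) Hi1) => i0 Hi0 Hmin.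
  pose b1 := override Q v b; pose b2 := override Q d b.
  have agree : seqAlloc c b1 i0 = seqAlloc c b2 i0.
    apply: seqAlloc_agree => i Hi.
    rewrite /b1 /b2 /override.
    case: ifP => // iQ.
    by have := Hmin i iQ; rewrite leqNgt Hi.
  have := H i0 Hi0.
  rewrite /util !mechPayE !mechAllocE.
  have E1 : Ach c b1 i0 = lexArgmax (fun S => v i0 S - price c (seqAlloc c b2 i0) i0 S).
    have iQ : i0 \in Q by [].
    have eb : b1 i0 = v i0 by rewrite /b1 /override iQ.
    by rewrite /Ach -agree eb.
  have := lexArgmaxP (fun S => v i0 S - price c (seqAlloc c b2 i0) i0 S) (Ach c b2 i0).
  rewrite -E1 -agree /=.
  move=> Hle Hlt; lra.
- move=> b _; exact: budget.
- move=> v Hv A'.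
  rewrite /socialCost -budget // -big_split /=.
  pose X := \sum_(i < n) (v i setT - v i (A' i)).
  have X0 : 0 <= X.
    apply: sumr_ge0 => i _; rewrite subr_ge0.
    by case: (Hv i) => _; apply; apply: subsetT.
  have S1 : \sum_(i < n) (mechPay c v i + (v i setT - v i (mechAlloc c v i)))
      <= X + \sum_(i < n) price c (seqAlloc c v i) i (A' i).
    rewrite /X -big_split /=; apply: ler_sum => i _.
    rewrite mechPayE mechAllocE.
    have := lexArgmaxP (fun S => v i S - price c (seqAlloc c v i) i S) (A' i).
    rewrite -/(Ach c v i) /= => Hle; lra.
  have S2 : \sum_(i < n) price c (seqAlloc c v i) i (A' i) <= alpha * cost c A'.
    apply: le_trans (_ : \sum_(i < n) \sum_(j < m)
        (if j \in A' i then c j [set i] else 0) <= _).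
      by apply: ler_sum => i _; apply: price_le.
    rewrite exchange_big /cost mulr_sumr; apply: ler_sum => j _.
    apply: le_trans (avg_sum _ (c0 j) (cavg j)).
    rewrite [X in _ <= X]big_mkcond /=; apply: ler_sum => i _.
    by rewrite inE.
  have C0 : 0 <= cost c A' by apply: sumr_ge0.
  rewrite -/X; nra.
Qed.
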